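(* Let $m \geq 1$ and let $n = p_1 p_2 \cdots p_m$, where $p_1 < p_2 < \cdots < p_m$ are primes. Then the zero-divisor graph $\Gamma(\mathbb{Z}_n)$ is a very cost effective graph.
   Context: $\mathbb{Z}_n$ is the ring of residue classes modulo $n$. The zero-divisor graph $\Gamma(\mathbb{Z}_n)$ has as vertices the nonzero zero-divisors of $\mathbb{Z}_n$ (nonzero $z$ such that $rz=0$ for some nonzero $r$), two distinct vertices being adjacent iff their product is $0$. For a graph $G=(V,E)$ and $S\subseteq V$, a vertex $v\in S$ is very cost effective if $|N(v)\cap S| < |N(v)\cap (V\setminus S)|$, where $N(v)$ is the open neighborhood of $v$; $S$ is very cost effective if every vertex of $S$ is very cost effective. A bipartition $\{S, V\setminus S\}$ of $V$ is very cost effective if both $S$ and $V\setminus S$ are very cost effective sets, and $G$ is a very cost effective graph if it has a very cost effective bipartition. *)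

(* Defs.v *)
From mathcomp Require Import all_boot.
Set Implicit Arguments. Unset Strict Implicit. Unset Printing Implicit Defensive.

(* A finite simple graph is given by a vertex set V : {set T} and a
   symmetric irreflexive adjacency relation adj (only its restriction to V matters). *)
Section Graph.
Variable T : finType.

Definition nbhd (V : {set T}) (adj : rel T) (v : T) : {set T} :=
  [set u in V | adj v u].

Definition vce_vertex (V : {set T}) (adj : rel T) (S : {set T}) (v : T) : bool :=
  #|nbhd V adj v :&: S| < #|nbhd V adj v :&: (V :\: S)|.

Definition vce_set (V : {set T}) (adj : rel T) (S : {set T}) : bool :=
  [forall v in S, vce_vertex V adj S v].

Definition vce_bipartition (V : {set T}) (adj : rel T) (S : {set T}) : bool :=
  [&& S \subset V, vce_set V adj S & vce_set V adj (V :\: S)].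

Definition vce_graph (V : {set T}) (adj : rel T) : Prop :=
  exists S : {set T}, vce_bipartition V adj S.
End Graph.

(* Zero-divisor graph of Z_n, residues represented by 'I_n. *)
Definition zd_vertices (n : nat) : {set 'I_n} :=
  [set x : 'I_n | (x != 0 :> nat) &&
     [exists y : 'I_n, (y != 0 :> nat) && ((x * y) %% n == 0)]].

Definition zd_adj (n : nat) : rel 'I_n :=
  fun x y => (x != y) && ((x * y) %% n == 0).

(* Main.v *)
Require Import Defs.
From mathcomp Require Import all_boot.

Section Key.
Variables (n p : nat).
Hypotheses (pP : prime p) (pn : p %| n) (sqf : ~~ (p * p %| n)).

Let V := zd_vertices n.
Let S := [set x in V | p %| x].

Lemma inV (x : 'I_n) : (x \in V) = (x != 0 :> nat) && [exists y : 'I_n, (y != 0 :> nat) && (n %| x * y)].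
Proof. by rewrite inE. Qed.

Lemma nbE (x u : 'I_n) : x \in V ->
  (u \in nbhd V (@zd_adj n) x) = [&& (u != 0 :> nat), x != u & n %| x * u].
Proof.
move=> xV; rewrite inE /zd_adj inV.
have xV' := xV; rewrite inV in xV'; case/andP: xV' => x0 _.
apply/idP/idP.
  by case/andP => /andP[-> _] /andP[-> h].
case/and3P => u0 xu nxu; rewrite u0 xu /=; apply/andP; split => //.
by apply/existsP; exists x; rewrite x0 mulnC; exact: nxu.
Qed.

Lemma gcd_facts (x : 'I_n) : x \in V ->
  exists q : 'I_n, [/\ (q != 0 :> nat), n %| x * q,
     (p %| x -> ~~ (p %| q)) & (~~ (p %| x) -> p %| q)].
Proof.
move=> xV; have n0 : 0 < n by apply: leq_ltn_trans (ltn_ord x).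
set d := gcdn x n.
have dn : d %| n := dvdn_gcdr _ _.
have dx : d %| x := dvdn_gcdl _ _.
have d0 : 0 < d by rewrite gcdn_gt0 n0 orbT.
have d1 : d != 1.
  apply/eqP => cop; move: xV; rewrite inV => /andP[_ /existsP[y /andP[y0 ny]]].
  move: ny; rewrite Gauss_dvdr; last by rewrite coprime_sym; apply/eqP.
  move=> /dvdn_leq; rewrite lt0n y0 => /(_ isT); by rewrite leqNgt ltn_ord.
have nqd : n = n %/ d * d by rewrite divnK.
have qlt : n %/ d < n by rewrite ltn_Pdiv // ltn_neqAle eq_sym d1 d0.
exists (Ordinal qlt); split => /=.
- by rewrite -lt0n divn_gt0 // dvdn_leq.
- rewrite -(divnK dx) -mulnA (mulnC d) -nqd; exact: dvdn_mull.
- move=> px; apply/negP => pq; move: sqf.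
  have pd : p %| d by rewrite dvdn_gcd px pn.
  by move/negP; apply; rewrite nqd; apply: dvdn_mul.
- move=> px; have : p %| n %/ d * d by rewrite -nqd.
  rewrite Euclid_dvdM // => /orP[//|pd].
  by move: px; rewrite (dvdn_trans pd dx).
Qed.

Lemma nbV (x u : 'I_n) : u \in nbhd V (@zd_adj n) x -> u \in V.
Proof. by rewrite /nbhd in_set => /andP[]. Qed.

Lemma memA (x u : 'I_n) : (u \in nbhd V (@zd_adj n) x :&: S) = (u \in nbhd V (@zd_adj n) x) && (p %| u).
Proof. rewrite in_setI; case h: (u \in nbhd V (@zd_adj n) x) => //=; by rewrite /S in_set (nbV _ _ h). Qed.

Lemma memB (x u : 'I_n) : (u \in nbhd V (@zd_adj n) x :&: (V :\: S)) = (u \in nbhd V (@zd_adj n) x) && ~~ (p %| u).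
Proof. rewrite in_setI; case h: (u \in nbhd V (@zd_adj n) x) => //=; by rewrite in_setD /S in_set (nbV _ _ h) andbT. Qed.

Lemma key : vce_bipartition V (@zd_adj n) S.
Proof.
have SV : S \subset V by apply/subsetP => x; rewrite /S in_set => /andP[].
have VSS : V :\: (V :\: S) = S.
  by apply/setP => x; rewrite !in_setD /S in_set; case: (x \in V); case: (p %| x).
rewrite /vce_bipartition SV /=; apply/andP; split.
- apply/forall_inP => x; rewrite /S in_set => /andP[xV px].
  have n0 : 0 < n by apply: leq_ltn_trans (ltn_ord x).
  have [q [q0 nxq pq _]] := gcd_facts _ xV.
  have pq' := pq px.
  pose f (y : 'I_n) : 'I_n := Ordinal (ltn_pmod (y + q) n0).
  have finj : injective f.
    move=> y z /(congr1 val) /= /eqP; rewrite eqn_modDr !modn_small //.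
    by move=> /eqP yz; apply: val_inj.
  rewrite /vce_vertex -(card_imset _ finj); apply: proper_card; apply/properP; split.
    apply/subsetP => _ /imsetP[y yA ->]; move: yA; rewrite memA memB !nbE //.
    case/andP => /and3P[y0 xy nxy] py.
    have pf : (p %| f y) = false.
      by rewrite /= /dvdn (modn_dvdm _ pn) -/(dvdn _ _) dvdn_addr // (negbTE pq').
    have ff0 : (f y != 0 :> nat).
      by apply/negP => /eqP e; move: pf; rewrite e dvdn0.
    have nxf : n %| x * f y.
      by rewrite /= /dvdn modnMmr -/(dvdn _ _) mulnDr dvdn_addr.
    have xf : x != f y by apply/negP => /eqP e; move: pf; rewrite -e px.
    by rewrite ff0 xf nxf pf.
  exists q.
    rewrite memB nbE // q0 nxq pq' andbT /= andbT.
    by apply/negP => /eqP e; move: pq'; rewrite -e px.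
  apply/imsetP => -[y yA /(congr1 val) /=] /eqP.
  move=> /eqP e; have : (y + q == 0 + q %[mod n]) by rewrite add0n (modn_small (ltn_ord q)) -e.
  rewrite eqn_modDr mod0n modn_small // => /eqP y0.
  move: yA; rewrite memA nbE // => /andP[/and3P[]].
  by rewrite -y0 eqxx.
- apply/forall_inP => x; rewrite in_setD /S in_set => /andP[px xV].
  rewrite xV /= in px.
  have [q [q0 nxq _ pq]] := gcd_facts _ xV.
  have pq' := pq px.
  rewrite /vce_vertex VSS.
  have -> : nbhd V (@zd_adj n) x :&: (V :\: S) = set0.
    apply/setP => u; rewrite memB nbE // in_set0.
    apply/negP => /andP[/and3P[u0 xu nxu]]; apply/negP/negPn.
    have : p %| x * u by apply: dvdn_trans nxu.
    by rewrite Euclid_dvdM // (negbTE px).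
  rewrite cards0 card_gt0; apply/set0Pn; exists q.
  rewrite memA nbE // q0 nxq pq' andbT /= andbT.
  by apply/negP => /eqP e; move: px; rewrite e pq'.
Qed.
End Key.

Theorem mainTheorem1 (ps : seq nat) :
  1 <= size ps -> sorted ltn ps -> all prime ps ->
  vce_graph (zd_vertices (\prod_(p <- ps) p)) (@zd_adj (\prod_(p <- ps) p)).
Proof.
case: ps => [//|p t] _ srt /andP[pP allt].
have pn : p %| \prod_(q <- p :: t) q by rewrite big_cons dvdn_mulr.
have sqf : ~~ (p * p %| \prod_(q <- p :: t) q).
  rewrite big_cons dvdn_pmul2l ?prime_gt0 //.
  rewrite Euclid_dvd_prod // big_has; apply/hasP => -[q qt pq].
  move: pq; rewrite dvdn_prime2 //; last by move/allP: allt => /(_ q qt).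
  move=> /eqP pq; have := order_path_min ltn_trans srt.
  by move=> /allP /(_ q qt); rewrite pq ltnn.
eexists; exact: (key _ _ pP pn sqf).
Qed.
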